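(* Let $K\ge 1$ be an integer, let $\Pi_1,\dots,\Pi_K$ be arbitrary probability distributions on $\mathcal{X}^1\times\mathcal{Y}$, let $(q_1,\dots,q_K)$ be a probability vector, let $\alpha\in(0,1)$, and let $n_1,\dots,n_K\ge 0$ be fixed (nonrandom) integers with $n=n_1+\dots+n_K$. Suppose the calibration data $(X_1,Y_1),\dots,(X_n,Y_n)$, with $X_i=(X_i^0,X_i^1)$, are generated independently as follows: for each $k\in[K]$ and each index $i\in\{n_1+\dots+n_{k-1}+1,\dots,n_1+\dots+n_k\}$, $X_i^0=k$ and $(X_i^1,Y_i)\sim\Pi_k$. Suppose the test point $(X_{n+1},Y_{n+1})$, $X_{n+1}=(X^0_{n+1},X^1_{n+1})$, is drawn independently of the calibration data from the distribution $Q$ given by $X^0_{n+1}\sim\textnormal{Multinomial}(q_1,\dots,q_K)$ (i.e. $\mathbb{P}\{X^0_{n+1}=k\}=q_k$) and $(X^1_{n+1},Y_{n+1})\mid X^0_{n+1}=k\ \sim\ \Pi_k$. Let $s:\mathcal{X}\times\mathcal{Y}\to\mathbb{R}$ be any fixed measurable score function, and let $\widehat{C}_n$ be the GWCP prediction set defined in the context. Then \[\mathbb{P}\left\{Y_{n+1}\in\widehat{C}_n(X_{n+1})\right\}\ \ge\ 1-\alpha-\max_{k:\,n_k>0}\{q_k/n_k\}.\]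
   Context: Features are $x=(x^0,x^1)\in\mathcal{X}=[K]\times\mathcal{X}^1$, where $x^0\in[K]=\{1,\dots,K\}$ is the group label. For a probability distribution $\mu$ on $\mathbb{R}\cup\{+\infty\}$ and $\tau\in(0,1]$, $\textnormal{Quantile}_{\tau}(\mu)=\inf\{t\in\mathbb{R}\cup\{+\infty\}:\mu([-\infty,t])\ge\tau\}$; $\delta_s$ denotes the point mass at $s$. Given calibration data, set $s_i=s(X_i,Y_i)$, $n_k=\sum_{i\le n}\mathbf{1}\{X_i^0=k\}$, and $\widehat{P}^{(k)}_{\textnormal{score}}=\frac{1}{n_k}\sum_{i\le n:\,X_i^0=k}\delta_{s_i}$ if $n_k>0$, while $\widehat{P}^{(k)}_{\textnormal{score}}=\delta_{+\infty}$ if $n_k=0$. The group-weighted conformal prediction (GWCP) set is $\widehat{C}_n(x)=\{y\in\mathcal{Y}: s(x,y)\le\widehat{q}\}$ with $\widehat{q}=\textnormal{Quantile}_{1-\alpha}\big(\sum_{k=1}^K q_k\widehat{P}^{(k)}_{\textnormal{score}}\big)$. *)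

(* Defs.v *)
From HB Require Import structures.
From mathcomp Require Import all_boot all_order all_algebra.
From mathcomp Require Import all_classical all_reals all_analysis.
Set Implicit Arguments. Unset Strict Implicit. Unset Printing Implicit Defensive.
Import Order.TTheory GRing.Theory Num.Theory.
Local Open Scope classical_set_scope.
Local Open Scope ring_scope.

Section GWCP.
Context {R : realType}.

(* A finitely supported distribution on R ∪ {+oo}, viewed as a set function on \bar R. *)
Definition point_mass (x : \bar R) : set (\bar R) -> R :=
  fun A => (x \in A)%:R.

Definition Phat (m : nat) (sc : 'I_m -> R) : set (\bar R) -> R :=
  if m == 0%N then point_mass +oo%E
  else fun A => (m%:R)^-1 * \sum_(j < m) point_mass (sc j)%:E A.

Definition mixture (K : nat) (q : 'I_K -> R) (mu : 'I_K -> set (\bar R) -> R) :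
  set (\bar R) -> R := fun A => \sum_(k < K) q k * mu k A.

Definition Quantile (tau : R) (mu : set (\bar R) -> R) : \bar R :=
  ereal_inf [set t : \bar R | t != -oo%E /\ tau <= mu [set x | (x <= t)%E]].

Definition gwcp_qhat (K : nat) (alpha : R) (q : 'I_K -> R) (nk : 'I_K -> nat)
  (sc : forall k : 'I_K, 'I_(nk k) -> R) : \bar R :=
  Quantile (1 - alpha) (mixture q (fun k => Phat (sc k))).

Definition gwcp_set (K : nat) (X1 Y : Type) (s : 'I_K -> X1 * Y -> R)
  (qhat : \bar R) (x : 'I_K * X1) : set Y :=
  [set y | ((s x.1 (x.2, y))%:E <= qhat)%E].

End GWCP.

(* Mutual independence of the calibration points Z k j and the test point
   (G, Zt), stated as the product rule on measurable rectangles. *)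
Definition gwcp_indep {R : realType} {d : measure_display} {T : measurableType d}
  (P : probability T R) {d1 : measure_display} (W : measurableType d1)
  (K : nat) (nk : 'I_K -> nat)
  (Z : forall k : 'I_K, 'I_(nk k) -> T -> W) (G : T -> 'I_K) (Zt : T -> W) : Prop :=
  forall (A : forall k : 'I_K, 'I_(nk k) -> set W) (k0 : 'I_K) (B : set W),
    (forall k j, measurable (A k j)) -> measurable B ->
    P [set w | (forall k j, A k j (Z k j w)) /\ G w = k0 /\ B (Zt w)] =
    ((\prod_(k < K) \prod_(j < nk k) P (Z k j @^-1` A k j)) *
      P [set w | G w = k0 /\ B (Zt w)])%E.

(* Main.v *)
Require Import Defs.
From HB Require Import structures.
From mathcomp Require Import all_boot all_order all_algebra.
From mathcomp Require Import all_classical all_reals all_analysis.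
From mathcomp Require Import measurable_realfun.
From mathcomp Require Import lra.
Import Order.TTheory GRing.Theory Num.Theory.
Local Open Scope classical_set_scope.
Local Open Scope ring_scope.

Set Implicit Arguments. Unset Strict Implicit. Unset Printing Implicit Defensive.

Section Det.
Variables (R : realType) (K : nat) (nk : 'I_K -> nat) (q : 'I_K -> R).
Definition Ix := {k : 'I_K & 'I_(nk k)}.
Definition Scal := forall k : 'I_K, 'I_(nk k) -> R.
Definition wt (k : 'I_K) : R := q k / (nk k)%:R.
Definition Mm (S : Scal) (y : R) : R :=
  \sum_(i : Ix) wt (tag i) * (S (tag i) (tagged i) < y)%R%:R.
Definition Mle (S : Scal) (y : R) : R :=
  \sum_(i : Ix) wt (tag i) * (S (tag i) (tagged i) <= y)%R%:R.

Lemma nested_sum (F : forall k : 'I_K, 'I_(nk k) -> R) :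
  \sum_(k < K) \sum_(j < nk k) F k j = \sum_(i : Ix) F (tag i) (tagged i).
Proof. by rewrite sig_big_dep. Qed.

Lemma mixture_real (S : Scal) t :
  mixture q (fun k => Phat (S k)) [set x | (x <= t%:E)%E] = Mle S t.
Proof.
rewrite /mixture /Mle -(nested_sum (fun k j => wt k * (S k j <= t)%R%:R)); apply: eq_bigr => k _.
rewrite /Phat; case: eqP => [n0|n0].
  rewrite big1 ?mulr0 //=.
    rewrite /point_mass; apply/eqP; rewrite mulr_natr mulrb.
    by case: ifP => //; rewrite in_setE /= leye_eq => /eqP.
  by case=> j hj; exfalso; move: hj; rewrite n0.
rewrite mulrA big_distrr; apply: eq_bigr => j _; rewrite /point_mass /wt.
congr (_ * _%:R); congr nat_of_bool.
by apply/idP/idP => [/set_mem /=|h]; [rewrite lee_fin | apply/mem_set; rewrite /= lee_fin].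
Qed.

Hypothesis hq : forall k, 0 <= q k.

Lemma wt_ge0 k : 0 <= wt k.
Proof. by rewrite /wt divr_ge0. Qed.

Lemma Mle_le_Mm S t y : t < y -> Mle S t <= Mm S y.
Proof.
move=> ty; apply: ler_sum => i _; apply: ler_wpM2l; first exact: wt_ge0.
rewrite ler_nat; case: (leP (S (tag i) (tagged i)) t) => //= h.
by rewrite (le_lt_trans h ty).
Qed.

Lemma Mm_mono S y y' : y <= y' -> Mm S y <= Mm S y'.
Proof.
move=> yy; apply: ler_sum => i _; apply: ler_wpM2l; first exact: wt_ge0.
rewrite ler_nat; case: (ltP (S (tag i) (tagged i)) y) => //= h.
by rewrite (lt_le_trans h yy).
Qed.

Lemma exists_below (S : Scal) (y : R) : exists t, (t < y) /\ (forall i : Ix, (S (tag i) (tagged i) <= t) = (S (tag i) (tagged i) < y)).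
Proof.
pose t := \big[Order.max/(y - 1)]_(i : Ix | S (tag i) (tagged i) < y) S (tag i) (tagged i).
have ty : t < y.
  by apply: bigmax_lt => //; rewrite ltrBlDr ltrDl.
exists t; split => // i; apply/idP/idP => h.
  exact: le_lt_trans h ty.
exact: (le_bigmax_cond (y - 1) (P := fun i : Ix => S (tag i) (tagged i) < y)).
Qed.

Lemma quantile_char (S : Scal) tau y :
  ((y%:E <= Quantile tau (mixture q (fun k => Phat (S k))))%E) <-> Mm S y < tau.
Proof.
rewrite /Quantile; split.
  move=> /ereal_infP H; rewrite ltNge; apply/negP => Hle.
  have [t [ty Ht]] := exists_below S y.
  have E : Mle S t = Mm S y by apply: eq_bigr => i _; rewrite Ht.
  suff : (y%:E <= t%:E)%E by rewrite lee_fin leNgt ty.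
  by apply: H; split => //; rewrite mixture_real E.
move=> Hlt; apply/ereal_infP => z [zn Hz].
case: z zn Hz => [r| |] zn Hz; last by rewrite eqxx in zn.
  rewrite lee_fin leNgt; apply/negP => ry.
  move: Hz; rewrite mixture_real => Hz.
  have := le_lt_trans (le_trans Hz (Mle_le_Mm S ry)) Hlt.
  by rewrite ltxx.
by rewrite leey.
Qed.

Definition upd (S : Scal) (i0 : Ix) (x : R) : Scal :=
  fun k j => if (Tagged (fun k => 'I_(nk k)) j == i0) then x else S k j.

Lemma Mm_upd S i0 x y : Mm (upd S i0 x) y <= Mm S y + wt (tag i0).
Proof.
rewrite /Mm (bigD1 i0) //= [X in _ <= X + _](bigD1 i0) //=.
rewrite (eq_bigr (fun i : Ix => wt (tag i) * (S (tag i) (tagged i) < y)%R%:R)); last first.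
  by case=> k j /= hne; rewrite /upd /= (negbTE hne).
case: i0 => k0 j0 /=; rewrite /upd /= eqxx.
set r := \sum_(i | _) _.
have w0 := wt_ge0 k0.
have h1 : wt k0 * (x < y)%R%:R <= wt k0.
  by rewrite -[X in _ <= X]mulr1; apply: ler_wpM2l => //; rewrite lern1 leq_b1.
have h2 : 0 <= wt k0 * (S k0 j0 < y)%R%:R by rewrite mulr_ge0.
rewrite addrAC lerD2r; apply: (le_trans h1).
by rewrite -{1}[wt k0]add0r lerD2r.
Qed.

Lemma L3 (S : Scal) tau : tau <= \sum_(i : Ix) wt (tag i) ->
  tau <= \sum_(i : Ix) wt (tag i) * (Mm S (S (tag i) (tagged i)) < tau)%R%:R.
Proof.
move=> hW.
pose Sx := fun i : Ix => S (tag i) (tagged i).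
pose A := [pred i : Ix | Mm S (Sx i) < tau].
case: (pickP (predC A)) => [i1 Hi1 | allA]; last first.
  rewrite (eq_bigr (fun i : Ix => wt (tag i))) // => i _.
  by have := allA i; rewrite /= => /negbFE ->; rewrite mulr1.
case: (arg_minP Sx Hi1) => i0 Hi0 Hmin.
have key : forall i, (Mm S (Sx i) < tau) = (Sx i < Sx i0).
  move=> i; apply/idP/idP => h.
    rewrite ltNge; apply/negP => h'.
    have := Mm_mono S h'; move: Hi0; rewrite /= -leNgt => h0 h1.
    by have := le_trans h0 h1; rewrite leNgt h.
  apply/negPn/negP => hA.
  by have := Hmin i hA; rewrite leNgt h.
rewrite (eq_bigr (fun i : Ix => wt (tag i) * (Sx i < Sx i0)%R%:R)); last first.
  by move=> i _; rewrite key.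
by move: Hi0; rewrite /= -leNgt.
Qed.
End Det.
Arguments upd {R K nk} S i0 x k j.

Section Gen.
Context (R : realType) d (T : measurableType d) (P : probability T R).

Lemma PE (A : set T) : measurable A -> P A = (fine (P A))%:E.
Proof. by move=> mA; rewrite fineK // fin_num_measure. Qed.

Lemma expect_lb (I : finType) (A : I -> set T) (w : I -> R) (c : R) :
  (forall i, measurable (A i)) -> (forall i, 0 <= w i) -> 0 <= c ->
  (forall x, c <= \sum_i w i * \1_(A i) x) ->
  c <= \sum_i w i * fine (P (A i)).
Proof.
move=> mA w0 c0 H.
rewrite -lee_fin -sumEFin.
have -> : (\sum_i (w i * fine (P (A i)))%:E = \sum_i (\int[P]_(x in setT) (w i * \1_(A i) x)%:E))%E.
  apply: eq_bigr => i _.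
  rewrite (ge0_integralZl_EFin _ _ (f1 := fun x => (\1_(A i) x)%:E)) //.
  - by rewrite integral_indic // setIT EFinM fineK // fin_num_measure.
  - by apply/measurable_EFinP; exact: measurable_indic.
rewrite -ge0_integral_sum //; last 2 first.
  - by move=> i; apply/measurable_EFinP; apply: measurable_funM.
  - by move=> i x _; rewrite lee_fin mulr_ge0.
under eq_integral => x _ do rewrite sumEFin.
have <- : (\int[P]_(x in setT) (cst c%:E x) = c%:E)%E.
  rewrite integral_cst // -[RHS]mule1; congr (_ * _)%E; exact: probability_setT.
apply: (@ge0_le_integral _ _ _ P setT measurableT) => //.
- apply/measurable_EFinP; apply: measurable_sum => i.
  by apply: measurable_funM => //; exact: measurable_indic.
- by move=> x _; rewrite lee_fin; exact: H.
Qed.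
End Gen.

Definition Om0 (R : realType) K (nk : 'I_K -> nat) := (Scal R nk * R)%type.
HB.instance Definition _ (R : realType) K nk := gen_eqMixin (@Om0 R K nk).
HB.instance Definition _ (R : realType) K nk := gen_choiceMixin (@Om0 R K nk).
HB.instance Definition _ (R : realType) K nk :=
  isPointed.Build (@Om0 R K nk) ((fun _ _ => 0), 0).

Section Omega.
Variables (R : realType) (K : nat) (nk : 'I_K -> nat).
Local Notation Ix := (Ix nk).
Local Notation Om0 := (@Om0 R K nk).

Definition rect (A : Ix -> set R) (B : set R) : set Om0 :=
  [set u | (forall i : Ix, A i (u.1 (tag i) (tagged i))) /\ B u.2].
Definition Rect : set (set Om0) :=
  [set D | exists A B, (forall i, measurable (A i)) /\ measurable B /\ D = rect A B].
Definition Om := g_sigma_algebraType Rect.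

Lemma Rect_meas (D : set Om) : Rect D -> measurable D.
Proof. exact: sub_sigma_algebra. Qed.

Lemma Rect_setI : setI_closed Rect.
Proof.
move=> _ _ [A [B [mA [mB ->]]]] [A' [B' [mA' [mB' ->]]]].
exists (fun i => A i `&` A' i), (B `&` B'); split; first by move=> i; exact: measurableI.
split; first exact: measurableI.
apply/seteqP; split => u /=.
  by move=> [[h1 h2] [h3 h4]]; split => // i; split.
by move=> [h1 [h2 h3]]; split; split => // i; have [] := h1 i.
Qed.

Lemma rectT : rect (fun _ => setT) setT = setT.
Proof. by apply/seteqP; split => u //= _; split. Qed.

Lemma rect_unique (m1 m2 : measure Om R) :
  (forall A B, (forall i, measurable (A i)) -> measurable B ->
     m1 (rect A B) = m2 (rect A B)) ->
  (m1 setT < +oo)%E -> forall D : set Om, measurable D -> m1 D = m2 D.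
Proof.
move=> H fin D mD.
apply: (@measure_unique _ R Om Rect (fun _ => setT) erefl) => //.
- exact: Rect_setI.
- move=> _; exists (fun _ => setT), setT; split => //; split => //.
  by rewrite rectT.
- by rewrite bigcup_const.
- by move=> _ [A [B [mA [mB ->]]]]; exact: H.
Qed.

Lemma proj1_meas (i : Ix) : measurable_fun setT (fun u : Om => u.1 (tag i) (tagged i)).
Proof.
move=> _ Y mY; rewrite setTI; apply: Rect_meas.
exists (fun i' => if i' == i then Y else setT), setT; split.
  by move=> i'; case: ifP.
split => //; apply/seteqP; split => u /=.
  by move=> h; split => // i'; case: eqP => [->|].
by move=> [h _]; have := h i; rewrite eqxx.
Qed.

Lemma proj2_meas : measurable_fun setT (fun u : Om => u.2).
Proof.
move=> _ Y mY; rewrite setTI; apply: Rect_meas.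
exists (fun _ => setT), Y; split => //; split => //.
by apply/seteqP; split => u /=; [move=> h; split|case].
Qed.

Lemma Mm_meas (q : 'I_K -> R) (f : Om -> R) (mf : measurable_fun setT f) c :
  measurable [set u : Om | Mm q u.1 (f u) < c].
Proof.
have mh : measurable_fun setT (fun u : Om => Mm q u.1 (f u)).
  apply: measurable_sum => i; apply: measurable_funM; first exact: measurable_cst.
  have mb : measurable_fun setT (fun b : bool => (b : nat)%:R : R).
    by move=> ? ? ?; exact: I.
  exact: (measurableT_comp mb (measurable_fun_ltr (proj1_meas i) mf)).
have := mh measurableT _ (measurable_itv `]-oo, c[).
rewrite setTI; congr measurable; apply/seteqP; split => u /=; by rewrite in_itv.
Qed.
End Omega.

Unset Implicit Arguments. Set Strict Implicit.

Section Main.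
Variables (R : realType) (d : measure_display) (T : measurableType d)
  (P : probability T R)
  (d1 d2 : measure_display) (X1 : measurableType d1) (Y : measurableType d2)
  (K : nat) (Pi : 'I_K -> probability (X1 * Y)%type R)
  (q : 'I_K -> R) (nk : 'I_K -> nat)
  (s : 'I_K -> (X1 * Y)%type -> R)
  (Z : forall k : 'I_K, 'I_(nk k) -> T -> (X1 * Y)%type)
  (G : T -> 'I_K) (Zt : T -> (X1 * Y)%type).
Hypotheses (hq0 : forall k, 0 <= q k) (hq1 : \sum_(k < K) q k = 1)
  (hs : forall k, measurable_fun setT (s k))
  (hZm : forall k j, measurable_fun setT (Z k j))
  (hGm : forall k, measurable (G @^-1` [set k]))
  (hZtm : measurable_fun setT Zt)
  (hZlaw : forall k j (A : set (X1 * Y)%type), measurable A ->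
     P (Z k j @^-1` A) = Pi k A)
  (htest : forall k (A : set (X1 * Y)%type), measurable A ->
     P [set w | G w = k /\ A (Zt w)] = ((q k)%:E * Pi k A)%E)
  (hindep : gwcp_indep P Z G Zt).

Local Notation Ix := (Ix nk).
Local Notation Om := (@Om R K nk).

Definition Sf (w : T) : Scal R nk := fun k j => s k (Z k j w).
Definition V (w : T) : Om := (Sf w, s (G w) (Zt w)).
Definition V' (w : T) : Om := (Sf w, 0).
Definition Gk (k : 'I_K) : set T := [set w | G w = k].

Lemma Gk_meas k : measurable (Gk k).
Proof. exact: hGm. Qed.

Lemma mpre d' d'' (U : measurableType d') (W : measurableType d'') (f : U -> W)
  (mf : measurable_fun setT f) A : measurable A -> measurable (f @^-1` A).
Proof. by move=> mA; rewrite -[_ @^-1` _]setTI; exact: mf. Qed.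

Lemma Zset_meas (A : Ix -> set R) : (forall i, measurable (A i)) ->
  measurable [set w | forall i : Ix, A i (Sf w (tag i) (tagged i))].
Proof.
move=> mA.
have -> : [set w | forall i : Ix, A i (Sf w (tag i) (tagged i))] =
  \bigcap_(i in setT) (Z (tag i) (tagged i) @^-1` (s (tag i) @^-1` A i)).
  by apply/seteqP; split => w /=; [move=> h i _; exact: h | move=> h i; exact: (h i I)].
apply: fin_bigcap_measurable; first exact: finite_finset.
by move=> i _; apply: mpre => //; apply: mpre.
Qed.

Lemma test_meas (B : set R) : measurable B ->
  measurable [set w | B (s (G w) (Zt w))].
Proof.
move=> mB.
have -> : [set w | B (s (G w) (Zt w))] =
  \bigcup_(k in setT) (Gk k `&` Zt @^-1` (s k @^-1` B)).
  apply/seteqP; split => w /=.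
    by move=> h; exists (G w) => //.
  by move=> [k _ [/= <-]].
apply: fin_bigcup_measurable; first exact: finite_finset.
move=> k _; apply: measurableI; first exact: Gk_meas.
by apply: mpre => //; apply: mpre.
Qed.

Lemma V_meas : measurable_fun setT (V : T -> Om).
Proof.
apply: (@measurability _ _ T Om setT V (@Rect R K nk) erefl).
move=> _ [_ [A [B [mA [mB ->]]]] <-]; rewrite setTI.
have -> : V @^-1` rect A B = [set w | forall i : Ix, A i (Sf w (tag i) (tagged i))]
  `&` [set w | B (s (G w) (Zt w))] by [].
by apply: measurableI; [exact: Zset_meas | exact: test_meas].
Qed.

Lemma V'_meas : measurable_fun setT (V' : T -> Om).
Proof.
apply: (@measurability _ _ T Om setT V' (@Rect R K nk) erefl).
move=> _ [_ [A [B [mA [mB ->]]]] <-]; rewrite setTI.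
have -> : V' @^-1` rect A B = [set w | forall i : Ix, A i (Sf w (tag i) (tagged i))]
  `&` [set w | B 0] by [].
apply: measurableI; first exact: Zset_meas.
by case: (pselect (B 0)) => hB; [rewrite (_ : [set w | B 0] = setT) //; apply/seteqP; split|
  rewrite (_ : [set w | B 0] = set0) //; apply/seteqP; split].
Qed.

Lemma upd_at (S : Scal R nk) i0 x (i : Ix) :
  upd S i0 x (tag i) (tagged i) = if i == i0 then x else S (tag i) (tagged i).
Proof. by case: i. Qed.

Definition sw (i0 : Ix) (u : Om) : Om := (upd u.1 i0 u.2, u.1 (tag i0) (tagged i0)).

Lemma sw_pre i0 (A : Ix -> set R) (B : set R) :
  sw i0 @^-1` rect A B = rect (fun i => if i == i0 then B else A i) (A i0).
Proof.
apply/seteqP; split => u /= [h hb]; split.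
- move=> i; case: eqP => [->|/eqP ne] //.
  by have := h i; rewrite /sw /= upd_at (negbTE ne).
- by have := h i0; rewrite /sw /= upd_at eqxx.
- move=> i; rewrite /sw /= upd_at; case: eqP => [->|/eqP ne] //.
  by have := h i; rewrite (negbTE ne).
- by have := h i0; rewrite eqxx.
Qed.

Lemma sw_meas i0 : measurable_fun setT (sw i0 : Om -> Om).
Proof.
apply: (@measurability _ _ Om Om setT (sw i0) (@Rect R K nk) erefl).
move=> _ [_ [A [B [mA [mB ->]]]] <-]; rewrite setTI sw_pre; apply: Rect_meas.
exists (fun i => if i == i0 then B else A i), (A i0); split => //.
by move=> i; case: ifP.
Qed.

Lemma sumG (E : set T) : measurable E -> P E = (\sum_(k < K) P (E `&` Gk k))%E.
Proof.
move=> mE.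
rewrite -(@measure_bigsetU_ord _ _ _ P K xpredT (fun k => E `&` Gk k)); last 2 first.
- by move=> k; apply: measurableI => //; exact: Gk_meas.
- apply/trivIsetP => i j _ _ ij; apply/seteqP; split => // w [[_ gi] [_ gj]].
  by move: ij; rewrite /Gk /= in gi gj; rewrite -gi -gj eqxx.
congr (P _); apply/seteqP; split => w.
  by move=> Ew; rewrite (bigD1 (G w)) //=; left.
by elim/big_ind: _ => //= [A B hA hB [/hA|/hB] //|k _ []].
Qed.

Lemma rectG (A : Ix -> set R) (B : set R) k0 :
  (forall i, measurable (A i)) -> measurable B ->
  P (V @^-1` rect A B `&` Gk k0) =
  ((\prod_(i : Ix) Pi (tag i) (s (tag i) @^-1` A i)) *
   ((q k0)%:E * Pi k0 (s k0 @^-1` B)))%E.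
Proof.
move=> mA mB.
have mA' : forall k (j : 'I_(nk k)), measurable (s k @^-1` A (Tagged (fun k => 'I_(nk k)) j)).
  by move=> k j; apply: mpre.
have mB' : measurable (s k0 @^-1` B) by apply: mpre.
have -> : V @^-1` rect A B `&` Gk k0 =
  [set w | (forall k j, (s k @^-1` A (Tagged (fun k => 'I_(nk k)) j)) (Z k j w)) /\
           G w = k0 /\ (s k0 @^-1` B) (Zt w)].
  apply/seteqP; split => w /=.
  - move=> [[h hb] g]; rewrite /Gk /= in g; split; first by move=> k j; exact: (h (Tagged _ j)).
    by split => //; rewrite -g.
  - move=> [h [g hb]]; split; last exact: g.
    by split; [case=> k j; exact: h k j | rewrite /= g].
rewrite (hindep _ _ _ mA' mB') (htest _ _ mB'); congr (_ * _)%E.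
rewrite sig_big_dep /=; apply: eq_bigr => -[k j] _ /=.
by rewrite hZlaw.
Qed.

Lemma P_fin (A : set T) : measurable A -> (P A < +oo)%E.
Proof. by move=> mA; rewrite (le_lt_trans (probability_le1 _ mA)) // ltry. Qed.

Lemma swapP (a b r qq : \bar R) : (a * r * (qq * b) = b * r * (qq * a))%E.
Proof.
by rewrite [LHS]muleC [RHS]muleC -!muleA; congr (_ * _)%E; exact: muleCA.
Qed.

Lemma F1 (i0 : Ix) (D : set Om) : measurable D ->
  P (V @^-1` D `&` Gk (tag i0)) = P ((sw i0 \o V) @^-1` D `&` Gk (tag i0)).
Proof.
move=> mD.
pose m1 : measure Om R := measure_function_pushforward__canonical__measure_function_Measure
  (mrestr P (Gk_meas (tag i0))) (f := V) V_meas.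
pose m2 : measure Om R := measure_function_pushforward__canonical__measure_function_Measure
  (mrestr P (Gk_meas (tag i0))) (f := sw i0 \o V) (measurableT_comp (sw_meas i0) V_meas).
apply: (@rect_unique R K nk m1 m2 _ _ D mD); last first.
  by rewrite /= /pushforward /mrestr P_fin //; apply: measurableI; [rewrite preimage_setT; exact: measurableT | exact: Gk_meas].
move=> A B mA mB; rewrite /= /pushforward /mrestr.
rewrite comp_preimage sw_pre !rectG //; last by move=> i; case: ifP.
rewrite [in RHS](bigD1 i0) //= [in LHS](bigD1 i0) //= eqxx.
have -> : (\prod_(i | i != i0) Pi (tag i) (s (tag i) @^-1` (if i == i0 then B else A i)) =
    \prod_(i | i != i0) Pi (tag i) (s (tag i) @^-1` A i))%E.
  by apply: eq_bigr => i /negbTE ->.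
exact: swapP.
Qed.

Lemma Pi_setT k : Pi k setT = 1%E.
Proof. exact: probability_setT. Qed.

Lemma ZsetP (A : Ix -> set R) : (forall i, measurable (A i)) ->
  P (V @^-1` rect A setT) = (\prod_(i : Ix) Pi (tag i) (s (tag i) @^-1` A i))%E.
Proof.
move=> mA.
have mVA : measurable (V @^-1` rect A setT).
  by rewrite -[_ @^-1` _]setTI; apply: V_meas => //; apply: Rect_meas; exists A, setT.
rewrite sumG //.
under eq_bigr => k _ do rewrite rectG // preimage_setT Pi_setT mule1.
rewrite -ge0_sume_distrr; last by move=> k _; rewrite lee_fin.
by rewrite sumEFin hq1 mule1.
Qed.

Lemma F2 (k0 : 'I_K) (D : set Om) : measurable D ->
  P (V' @^-1` D `&` Gk k0) = ((q k0)%:E * P (V' @^-1` D))%E.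
Proof.
move=> mD.
pose m1 : measure Om R := measure_function_pushforward__canonical__measure_function_Measure
  (mrestr P (Gk_meas k0)) (f := V') V'_meas.
pose m0 : measure Om R := measure_function_pushforward__canonical__measure_function_Measure
  P (f := V') V'_meas.
pose m2 : measure Om R := mscale (NngNum (hq0 k0)) m0.
apply: (@rect_unique R K nk m1 m2 _ _ D mD); last first.
  by rewrite /= /pushforward /mrestr P_fin //; apply: measurableI; [rewrite preimage_setT; exact: measurableT | exact: Gk_meas].
move=> A B mA mB; rewrite /= /mscale /pushforward /mrestr /=.
case: (pselect (B 0)) => hB.
  have E : V' @^-1` rect A B = V @^-1` rect A setT.
    by apply/seteqP; split => w /= [h _]; split.
  rewrite /pushforward !E ZsetP // rectG // preimage_setT Pi_setT mule1.
  exact: muleC.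
have E : V' @^-1` rect A B = set0.
  by apply/seteqP; split => w // [_ /= h].
by rewrite /pushforward !E set0I !measure0 mule0.
Qed.

Definition Dset (tau : R) (i : Ix) : set Om :=
  [set u | Mm q u.1 (u.1 (tag i) (tagged i)) < tau].

Lemma Dset_meas tau i : measurable (Dset tau i).
Proof. exact: (Mm_meas q (proj1_meas i) tau). Qed.

Lemma ws_ge0 : 0 <= \big[Num.max/0]_(k < K | nk k != 0%N) (q k / (nk k)%:R).
Proof.
elim/big_ind: _ => //= [x y hx hy|k _]; first by rewrite le_max hx.
by rewrite divr_ge0.
Qed.

Lemma wt_le_ws (i : Ix) :
  wt nk q (tag i) <= \big[Num.max/0]_(k < K | nk k != 0%N) (q k / (nk k)%:R).
Proof.
have hn : nk (tag i) != 0%N by case: i => k j /=; rewrite -lt0n (leq_ltn_trans _ (ltn_ord j)).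
exact: (le_bigmax_cond 0 (P := fun k : 'I_K => nk k != 0%N) (fun k => q k / (nk k)%:R) hn).
Qed.

Lemma PmeasE (A : set T) : measurable A -> P A = (fine (P A))%:E.
Proof. exact: PE. Qed.

Lemma main (alpha : R) (halpha : 0 < alpha < 1) :
  let qhat := fun w => gwcp_qhat alpha q (fun k j => s k (Z k j w)) in
  ((1 - alpha - \big[Num.max/0]_(k < K | nk k != 0%N) (q k / (nk k)%:R))%:E
    <= P [set w | gwcp_set s (qhat w) (G w, (Zt w).1) (Zt w).2])%E.
Proof.
cbv zeta.
have ws0 := ws_ge0.
set ws := \big[Num.max/0]_(k < K | nk k != 0%N) (q k / (nk k)%:R) in ws0 *.
set tau := 1 - alpha - ws.
pose CovO : set Om := [set u | Mm q u.1 u.2 < 1 - alpha].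
have mCovO : measurable CovO := Mm_meas q (@proj2_meas R K nk) (1 - alpha).
have CovE : [set w | gwcp_set s (gwcp_qhat alpha q (fun k j => s k (Z k j w))) (G w, (Zt w).1) (Zt w).2] = V @^-1` CovO.
  apply/seteqP; split => w; rewrite /gwcp_set /= -surjective_pairing => h.
    exact/(quantile_char hq0 (Sf w)).
  exact/(quantile_char hq0 (Sf w)).
have mCov : measurable (V @^-1` CovO) by apply: mpre => //; exact: V_meas.
rewrite CovE.
pose W := \sum_(i : Ix) wt nk q (tag i).
case: (ltP W (1 - alpha)) => hW.
  have -> : V @^-1` CovO = setT.
    apply/seteqP; split => w // _; rewrite /CovO /=; apply: le_lt_trans hW.
    apply: ler_sum => i _; rewrite -[X in _ <= X]mulr1; apply: ler_wpM2l.
      exact: wt_ge0.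
    by rewrite lern1 leq_b1.
  rewrite probability_setT lee_fin /tau.
  by case/andP: halpha => a0 _; lra.
case: (leP tau 0) => htau.
  by rewrite (le_trans _ (measure_ge0 P _)) // lee_fin.
rewrite PmeasE // lee_fin.
have hsum : fine (P (V @^-1` CovO)) = \sum_(k < K) fine (P (V @^-1` CovO `&` Gk k)).
  apply: EFin_inj; rewrite -PmeasE // sumG // -sumEFin; apply: eq_bigr => k _.
  by rewrite -PmeasE //; apply: measurableI => //; exact: Gk_meas.
have stepB : forall k : 'I_K,
  \sum_(j < nk k) wt nk q k * fine (P (V' @^-1` Dset tau (Tagged (fun k => 'I_(nk k)) j)))
    <= fine (P (V @^-1` CovO `&` Gk k)).
  move=> k.
  have hC : 0 <= fine (P (V @^-1` CovO `&` Gk k)) by rewrite fine_ge0.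
  case: (posnP (nk k)) => hn.
    by rewrite big1 // => -[m hm]; exfalso; move: hm; rewrite hn.
  set C := fine (P (V @^-1` CovO `&` Gk k)).
  have -> : C = \sum_(j < nk k) (nk k)%:R^-1 * C.
    by rewrite sumr_const card_ord -mulrnAl -[X in _ = X * C]mulr_natr mulVf ?mul1r // pnatr_eq0 -lt0n.
  apply: ler_sum => j _.
  set i := Tagged (fun k => 'I_(nk k)) j.
  have mA : measurable (V' @^-1` Dset tau i) by apply: mpre; [exact: V'_meas | exact: Dset_meas].
  have -> : wt nk q k * fine (P (V' @^-1` Dset tau i)) =
            (nk k)%:R^-1 * fine (P (V' @^-1` Dset tau i `&` Gk k)).
    have mAG : measurable (V' @^-1` Dset tau i `&` Gk k) by apply: measurableI => //; exact: Gk_meas.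
    have := F2 k (Dset tau i) (Dset_meas tau i); rewrite (PmeasE _ mA) (PmeasE _ mAG).
    by move=> [->]; rewrite /wt mulrAC mulrC.
  apply: ler_wpM2l; first by rewrite invr_ge0.
  have -> : C = fine (P ((sw i \o V) @^-1` CovO `&` Gk (tag i))) by exact: (congr1 fine (F1 i CovO mCovO)).
  have mB : measurable ((sw i \o V) @^-1` CovO `&` Gk (tag i)).
    apply: measurableI; last exact: Gk_meas.
    by apply: mpre => //; exact: (measurableT_comp (sw_meas i) V_meas).
  rewrite -lee_fin -(PmeasE _ mB) -PmeasE; last by apply: measurableI => //; exact: Gk_meas.
  apply: le_measure; rewrite ?inE //; first by apply: measurableI => //; exact: Gk_meas.
  move=> w [hw gw]; split => //.
  rewrite /CovO /= /sw /=.
  apply: (le_lt_trans (Mm_upd hq0 (Sf w) i _ _)).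
  have := wt_le_ws i; rewrite -/ws => hi.
  move: hw; rewrite /Dset /= => hw.
  by rewrite /tau in hw; rewrite -ltrBrDr (lt_le_trans hw) // lerB.
have htW : tau <= W by apply: le_trans hW; rewrite /tau lerBlDr lerDl.
have stepD : tau <= \sum_(i : Ix) wt nk q (tag i) * fine (P (V' @^-1` Dset tau i)).
  apply: (expect_lb P (A := fun i => V' @^-1` Dset tau i) (w := fun i => wt nk q (tag i))).
  - by move=> i; apply: mpre; [exact: V'_meas | exact: Dset_meas].
  - by move=> i; exact: wt_ge0.
  - exact: ltW.
  - move=> x; apply: (le_trans (L3 hq0 (Sf x) htW)); rewrite le_eqVlt; apply/orP; left; apply/eqP.
    apply: eq_bigr => i _; rewrite indicE; congr (_ * (nat_of_bool _)%:R).
    by apply/idP/idP => h; [exact: (mem_set h) | exact: (set_mem h)].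
apply: (le_trans stepD); rewrite hsum.
have -> : \sum_(i : Ix) wt nk q (tag i) * fine (P (V' @^-1` Dset tau i)) =
  \sum_(k < K) \sum_(j < nk k) wt nk q k * fine (P (V' @^-1` Dset tau (Tagged (fun k => 'I_(nk k)) j))).
  by rewrite nested_sum; apply: eq_bigr => -[k j].
by apply: ler_sum => k _; exact: stepB.
Qed.
End Main.

Theorem theorem1 (R : realType) (d : measure_display) (T : measurableType d)
  (P : probability T R)
  (d1 d2 : measure_display) (X1 : measurableType d1) (Y : measurableType d2)
  (K : nat) (hK : (1 <= K)%N)
  (Pi : 'I_K -> probability (X1 * Y)%type R)
  (q : 'I_K -> R) (hq0 : forall k, 0 <= q k) (hq1 : \sum_(k < K) q k = 1)
  (alpha : R) (halpha : 0 < alpha < 1)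
  (nk : 'I_K -> nat)
  (s : 'I_K -> (X1 * Y)%type -> R) (hs : forall k, measurable_fun setT (s k))
  (Z : forall k : 'I_K, 'I_(nk k) -> T -> (X1 * Y)%type)
  (G : T -> 'I_K) (Zt : T -> (X1 * Y)%type)
  (hZm : forall k j, measurable_fun setT (Z k j))
  (hGm : forall k, measurable (G @^-1` [set k]))
  (hZtm : measurable_fun setT Zt)
  (hZlaw : forall k j (A : set (X1 * Y)%type), measurable A ->
     P (Z k j @^-1` A) = Pi k A)
  (htest : forall k (A : set (X1 * Y)%type), measurable A ->
     P [set w | G w = k /\ A (Zt w)] = ((q k)%:E * Pi k A)%E)
  (hindep : gwcp_indep P Z G Zt) :
  let qhat := fun w => gwcp_qhat alpha q (fun k j => s k (Z k j w)) in
  ((1 - alpha - \big[Num.max/0]_(k < K | nk k != 0%N) (q k / (nk k)%:R))%:E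
    <= P [set w | gwcp_set s (qhat w) (G w, (Zt w).1) (Zt w).2])%E.
Proof. exact: (main R d T P d1 d2 X1 Y K Pi q nk s Z G Zt hq0 hq1 hs hZm hGm hZtm hZlaw htest hindep alpha halpha). Qed.
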